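(* Let $k\in\omega\setminus\{0,1\}$, let $A$ be a nontrivial closed class of decision tables from $\mathcal M_k^\infty$, $\psi$ a bounded complexity measure, $T\in A$, $n\in\omega$, and suppose $l_\psi(T,n)>0$. Then there exists a mapping $\nu:E_k^{W(T)}\to\mathcal P(\omega)$ such that the table $T^*=J(\nu,T)$ satisfies $\psi^a(T^* )\le n$ and $\psi^d(T^* )\ge\log_k l_\psi(T,n)$.
   Context: Notation: $\omega=\{0,1,2,\dots\}$; $\mathcal P(\omega)$ is the set of nonempty finite subsets of $\omega$; for $k\in\omega\setminus\{0,1\}$, $E_k=\{0,1,\dots,k-1\}$. $P=\{f_i:i\in\omega\}$ is a set of attributes, $f_i\neq f_j$ for $i\ne j$. Decision tables: $\mathcal M_k^\infty$ is the set of rectangular tables filled with numbers from $E_k$, whose columns are labeled with pairwise different attributes from $P$, whose rows are pairwise different, and each row of which is labeled with a set from $\mathcal P(\omega)$ (its set of decisions). The empty table (no rows) is denoted $\Lambda$ and belongs to $\mathcal M_k^\infty$. For $T\in\mathcal M_k^\infty$: $\Delta(T)$ is the set of rows; $\Pi(T)$ is the intersection of the decision sets of all rows (common decisions); $\mathrm{At}(T)$ is the set of attributes labeling columns; $W(T)=|\mathrm{At}(T)|$. For nonempty $T$, $\Omega_k(T)$ is the set of finite words (including the empty word $\lambda$) over the alphabet $\{(f_i,\delta):f_i\in\mathrm{At}(T),\delta\in E_k\}$; for $\alpha=(f_{i_1},\delta_1)\cdots(f_{i_m},\delta_m)$, $T\alpha$ is the subtable of $T$ consisting of the rows having value $\delta_j$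 in the column $f_{i_j}$ for all $j$, and $T\lambda=T$. Operations: for $D\subseteq\mathrm{At}(T)$, $I(D,T)$ is obtained from $T$ by deleting the columns labeled with attributes from $D$ and, in each group of rows coinciding on the remaining columns, keeping only the first row; $I(\mathrm{At}(T),T)=\Lambda$. For $\nu:E_k^{|\mathrm{At}(T)|}\to\mathcal P(\omega)$, $J(\nu,T)$ is obtained by replacing the decision set of each row $\bar\delta$ by $\nu(\bar\delta)$. $[T]=\{J(\nu,I(D,T)):D\subseteq\mathrm{At}(T),\ \nu:E_k^{|\mathrm{At}(T)\setminus D|}\to\mathcal P(\omega)\}$; for nonempty $A\subseteq\mathcal M_k^\infty$, $[A]=\bigcup_{T\in A}[T]$. $A$ is a closed class if $[A]=A$; nontrivial if it contains a nonempty table. Decision trees: a $k$-decision tree is a finite directed rooted tree with at least two nodes in which the root and the edges leaving the root are unlabeled, each terminal node is labeled with a decision from $\omega$, and each other node is labeled with an attribute from $P$, each edge leaving such a node being labeled with a number from $E_k$. $\mathrm{At}(\Gamma)$ is the set of attributes labeling nodes of $\Gamma$. For a complete path $\tau=v_1,d_1,\dots,v_m,d_m,v_{m+1}$ (from the root to a terminal node), $\pi(\tau)=\lambda$ if $m=1$, and otherwise $\pi(\tau)=(f_{i_2},\delta_2)\cdots(f_{i_m},\delta_m)$ where $v_j$ is labeled $f_{i_j}$ and $d_j$ is labeled $\delta_j$; $T(\tau)=T\pi(\tau)$. For $T\ne\Lambda$, a nondeterministic decision tree for $T$ is a $k$-decision tree $\Gamma$ with $\mathrm{At}(\Gamma)\subseteq\mathrm{At}(T)$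 such that every row of $T$ belongs to $T(\tau)$ for some complete path $\tau$, and for every complete path $\tau$ either $T(\tau)=\Lambda$ or the decision at the terminal node of $\tau$ belongs to $\Pi(T(\tau))$. A deterministic decision tree for $T$ is a nondeterministic decision tree for $T$ in which, additionally, exactly one edge leaves the root and the edges leaving any node that is neither the root nor terminal are labeled with pairwise different numbers. Complexity measures: a partially bounded complexity measure is a function $\psi:P^*\to\omega$ on finite words over $P$ such that for all words $\alpha_1,\alpha_2$: $\psi(\alpha_1)=0$ iff $\alpha_1=\lambda$; $\psi(\alpha_1)$ is invariant under permutation of letters; $\psi(\alpha_1)\le\psi(\alpha_1\alpha_2)$; $\psi(\alpha_1\alpha_2)\le\psi(\alpha_1)+\psi(\alpha_2)$. It is bounded if in addition $\psi(\alpha)\ge|\alpha|$ for all $\alpha$. $\psi$ is extended to words $(f_{i_1},\delta_1)\cdots(f_{i_m},\delta_m)$ by $\psi(f_{i_1}\cdots f_{i_m})$ ($\psi(\lambda)=0$). For a $k$-decision tree $\Gamma$, $\psi(\Gamma)=\max_\tau\psi(\pi(\tau))$ over complete paths. For $T\ne\Lambda$, $\psi^d(T)$ (resp. $\psi^a(T)$) is the minimum of $\psi(\Gamma)$ over deterministic (resp. nondeterministic) decision trees $\Gamma$ for $T$; $\psi^d(\Lambda)=\psi^a(\Lambda)=0$. Covers: for $T\ne\Lambda$ and $n\in\omega$, $\Omega_k^n(T)=\{\alpha\in\Omega_k(T):\psi(\alpha)\le n\}$. A finite set $U\subseteq\Omega_k^n(T)$ is a $(\psi,n)$-cover of $T$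 if $\bigcup_{\alpha\in U}\Delta(T\alpha)=\Delta(T)$; it is irreducible if no proper subset of $U$ is a $(\psi,n)$-cover of $T$. $l_\psi(T,n)$ is the maximum cardinality of an irreducible $(\psi,n)$-cover of $T$; $l_\psi(\Lambda,n)=0$. *)

(* Defs.v *)
From Stdlib Require Import Reals ClassicalDescription.
From mathcomp Require Import all_boot.

Set Implicit Arguments.
Unset Strict Implicit.
Unset Printing Implicit Defensive.

(* Attributes f_i are represented by their index i : nat.              *)
(* A finite nonempty decision set (element of P(omega)) is represented *)
(* canonically by a nonempty strictly increasing seq nat.             *)
(* A decision table: list of column attributes, list of rows; a row is *)
(* (tuple of values in column order, decision set).                    *)

Record table := Table { cols : seq nat; rows : seq (seq nat * seq nat) }.

Definition Lam : table := Table [::] [::].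

Definition is_dset (s : seq nat) : bool := (s != [::]) && sorted ltn s.

Definition wf_table (k : nat) (T : table) : bool :=
  [&& uniq (cols T),
      all (fun r => [&& size r.1 == size (cols T), all (fun x => x < k) r.1
                      & is_dset r.2]) (rows T),
      uniq (map fst (rows T))
    & (rows T == [::]) == (cols T == [::])].

(* nu : E_k^m -> P(omega) (only its values on E_k^m matter) *)
Definition valid_nu (k m : nat) (nu : seq nat -> seq nat) : Prop :=
  forall v : seq nat, size v = m -> all (fun x => x < k) v -> is_dset (nu v).

Definition Jop (nu : seq nat -> seq nat) (T : table) : table :=
  Table (cols T) [seq (r.1, nu r.1) | r <- rows T].

Definition proj (D : seq nat) (cs : seq nat) (v : seq nat) : seq nat :=
  [seq x.1 | x <- zip v cs & x.2 \notin D].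

Fixpoint keep_first (D cs : seq nat) (seen : seq (seq nat))
    (rs : seq (seq nat * seq nat)) : seq (seq nat * seq nat) :=
  match rs with
  | [::] => [::]
  | r :: rs' =>
      if proj D cs r.1 \in seen then keep_first D cs seen rs'
      else (proj D cs r.1, r.2) :: keep_first D cs (proj D cs r.1 :: seen) rs'
  end.

Definition Iop (D : seq nat) (T : table) : table :=
  if all (fun f => f \in D) (cols T) then Lam
  else Table [seq f <- cols T | f \notin D] (keep_first D (cols T) [::] (rows T)).

Definition in_closure (k : nat) (T T' : table) : Prop :=
  exists (D : seq nat) (nu : seq nat -> seq nat),
    {subset D <= cols T} /\
    valid_nu k (size [seq f <- cols T | f \notin D]) nu /\
    T' = Jop nu (Iop D T).

Definition closed_class (k : nat) (A : table -> Prop) : Prop :=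
  (forall T, A T -> wf_table k T) /\
  (exists T, A T) /\
  (forall T', (exists T, A T /\ in_closure k T T') <-> A T').

Definition nontrivial (A : table -> Prop) : Prop :=
  exists T, A T /\ rows T != [::].

(* Words over {(f_i, delta)} *)
Definition word := seq (nat * nat).

Definition in_Omega (k : nat) (T : table) (a : word) : bool :=
  all (fun p => (p.1 \in cols T) && (p.2 < k)) a.

Definition row_matches (T : table) (v : seq nat) (a : word) : bool :=
  all (fun p => nth 0 v (index p.1 (cols T)) == p.2) a.

Definition subtable (T : table) (a : word) : table :=
  let rs := [seq r <- rows T | row_matches T r.1 a] in
  if rs == [::] then Lam else Table (cols T) rs.

Definition in_Pi (T : table) (d : nat) : bool :=
  all (fun r => d \in r.2) (rows T).

Definition partially_bounded_measure (psi : seq nat -> nat) : Prop :=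
  (forall a, psi a = 0 <-> a = [::]) /\
  (forall a b, perm_eq a b -> psi a = psi b) /\
  (forall a b, psi a <= psi (a ++ b)) /\
  (forall a b, psi (a ++ b) <= psi a + psi b).

Definition bounded_measure (psi : seq nat -> nat) : Prop :=
  partially_bounded_measure psi /\ (forall a, size a <= psi a).

Definition psiw (psi : seq nat -> nat) (a : word) : nat := psi (map fst a).

(* k-decision trees. The root is implicit: a tree is the nonempty list *)
(* of subtrees hanging from the (unlabeled) root by unlabeled edges.   *)
(* Node f ch : node labeled with attribute f, with edges (delta, t).   *)
Inductive dnode := Leaf of nat | Node of nat & seq (nat * dnode).

Definition dtree := seq dnode.

Fixpoint node_ok (k : nat) (t : dnode) : bool :=
  match t with
  | Leaf _ => true
  | Node _ ch => ~~ nilp ch && all (fun p => (p.1 < k) && node_ok k p.2) ch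
  end.

Fixpoint node_det (t : dnode) : bool :=
  match t with
  | Leaf _ => true
  | Node _ ch => uniq (map fst ch) && all (fun p => node_det p.2) ch
  end.

Fixpoint node_attrs (t : dnode) : seq nat :=
  match t with
  | Leaf _ => [::]
  | Node f ch => f :: flatten (map (fun p => node_attrs p.2) ch)
  end.

(* complete paths starting below the root: (pi(tau), terminal decision) *)
Fixpoint node_paths (t : dnode) : seq (word * nat) :=
  match t with
  | Leaf d => [:: ([::], d)]
  | Node f ch =>
      flatten (map (fun p => [seq ((f, p.1) :: q.1, q.2) | q <- node_paths p.2]) ch)
  end.

Definition k_tree (k : nat) (G : dtree) : bool := ~~ nilp G && all (node_ok k) G.
Definition tree_attrs (G : dtree) : seq nat := flatten (map node_attrs G).
Definition tree_paths (G : dtree) : seq (word * nat) := flatten (map node_paths G).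

Definition tree_cost (psi : seq nat -> nat) (G : dtree) : nat :=
  \max_(tau <- tree_paths G) psiw psi tau.1.

Definition nondet_tree (k : nat) (T : table) (G : dtree) : Prop :=
  [/\ k_tree k G,
      {subset tree_attrs G <= cols T},
      (forall r, r \in rows T -> exists2 tau, tau \in tree_paths G & row_matches T r.1 tau.1)
    & (forall tau, tau \in tree_paths G ->
         subtable T tau.1 = Lam \/ in_Pi (subtable T tau.1) tau.2)].

Definition det_tree (k : nat) (T : table) (G : dtree) : Prop :=
  [/\ nondet_tree k T G, size G = 1 & all node_det G].

(* minimum / maximum of a set of naturals (0 if it does not exist)     *)
Lemma natmin_ex (P : nat -> Prop) :
  (exists m, P m) -> exists m, is_left (excluded_middle_informative (P m)).
Proof.
case=> m Pm; exists m; by case: excluded_middle_informative.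
Qed.

Definition natmin (P : nat -> Prop) : nat :=
  match excluded_middle_informative (exists m, P m) with
  | left h => ex_minn (natmin_ex h)
  | right _ => 0
  end.

Definition natmax (P : nat -> Prop) : nat :=
  natmin (fun m => P m /\ forall x, P x -> x <= m).

Definition psi_d (k : nat) (psi : seq nat -> nat) (T : table) : nat :=
  if rows T == [::] then 0
  else natmin (fun m => exists G, det_tree k T G /\ tree_cost psi G = m).

Definition psi_a (k : nat) (psi : seq nat -> nat) (T : table) : nat :=
  if rows T == [::] then 0
  else natmin (fun m => exists G, nondet_tree k T G /\ tree_cost psi G = m).

Definition is_cover (k : nat) (psi : seq nat -> nat) (T : table) (n : nat)
    (U : seq word) : Prop :=
  [/\ uniq U,
      all (fun a => in_Omega k T a && (psiw psi a <= n)) U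
    & forall r, r \in rows T -> has (row_matches T r.1) U].

Definition irreducible_cover (k : nat) (psi : seq nat -> nat) (T : table) (n : nat)
    (U : seq word) : Prop :=
  is_cover k psi T n U /\
  (forall U', uniq U' -> {subset U' <= U} -> size U' < size U -> ~ is_cover k psi T n U').

Definition l_psi (k : nat) (psi : seq nat -> nat) (T : table) (n : nat) : nat :=
  if rows T == [::] then 0
  else natmax (fun m => exists U, irreducible_cover k psi T n U /\ size U = m).

Definition logk (k x : nat) : R := Rdiv (ln (INR x)) (ln (INR k)).

(* Main.v *)
Require Import Defs.
From Stdlib Require Import Reals ClassicalDescription Classical Lia Lra.
From mathcomp Require Import all_boot.
Set Implicit Arguments.
Unset Strict Implicit.
Unset Printing Implicit Defensive.

Lemma natminP (P : nat -> Prop) :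
  (exists m, P m) -> P (natmin P) /\ forall m, P m -> natmin P <= m.
Proof.
move=> ex; rewrite /natmin; case: excluded_middle_informative => // h.
case: ex_minnP => m Hm Hmin; split.
  by move: Hm; case: excluded_middle_informative.
move=> x Px; apply: Hmin; by case: excluded_middle_informative.
Qed.

Lemma natmin0 (P : nat -> Prop) : ~ (exists m, P m) -> natmin P = 0.
Proof. by move=> h; rewrite /natmin; case: excluded_middle_informative. Qed.

Fixpoint dnode_ind' (P : dnode -> Prop) (HL : forall d, P (Leaf d))
  (HN : forall f ch, (forall p, List.In p ch -> P p.2) -> P (Node f ch))
  (t : dnode) {struct t} : P t :=
  match t with
  | Leaf d => HL d
  | Node f ch => HN f ch ((fix go (l : seq (nat * dnode)) : forall p, List.In p l -> P p.2 :=
        match l with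
        | [::] => fun p (H : List.In p [::]) => False_ind _ H
        | (lab, t') :: l' => fun p H => match H with
              | or_introl e => eq_ind (lab, t') (fun x => P x.2) (dnode_ind' HL HN t') p e
              | or_intror H' => go l' p H' end end) ch)
  end.

Lemma mem_flat_map (A : Type) (B : eqType) (F : A -> seq B) (s : seq A) x :
  x \in flatten (map F s) <-> exists p, List.In p s /\ x \in F p.
Proof.
elim: s => [|p s IH] /=; first by split=> // [[p []]].
rewrite mem_cat; split.
  case/orP=> [h|/IH [q [q1 q2]]]; [by exists p; split; [left|]| by exists q; split; [right|]].
case=> q [[<-|qi] xq]; first by rewrite xq.
by apply/orP; right; apply/IH; exists q.
Qed.

Lemma all_In (A : Type) (a : pred A) s p : all a s -> List.In p s -> a p.
Proof. elim: s => //= q s IH /andP[aq as_] [<-|]//; exact: IH. Qed.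

Lemma size_flat_le (A B : Type) (F : A -> seq B) (s : seq A) b :
  (forall p, List.In p s -> size (F p) <= b) -> size (flatten (map F s)) <= size s * b.
Proof.
elim: s => //= p s IH H; rewrite size_cat mulSn leq_add //.
  by apply: H; left.
by apply: IH => q qi; apply: H; right.
Qed.

Lemma paths_count k t d : 0 < k -> node_det t -> node_ok k t ->
  (forall tau, tau \in node_paths t -> size tau.1 <= d) -> size (node_paths t) <= k ^ d.
Proof.
move=> k0; move: t d; apply: dnode_ind' => [x|f ch IH] d /=.
  by move=> _ _ _; rewrite expn_gt0 k0.
case/andP=> u adet /andP[_ aok] H.
case: d H => [|d] H.
  case E: (flatten _) => [|tau s] //.
  have : tau \in flatten [seq [seq ((f, p.1) :: q.1, q.2) | q <- node_paths p.2] | p <- ch].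
    by rewrite E mem_head.
  move=> /mem_flat_map [p [_ /mapP [q _ Eq]]].
  by move: (H tau); rewrite E mem_head Eq => /(_ isT).
apply: (@leq_trans (size ch * k ^ d)).
  apply: size_flat_le => p pin; rewrite size_map; apply: IH => //.
  - exact: (all_In adet pin).
  - by case/andP: (all_In aok pin).
  - move=> tau taup; have := H ((f, p.1) :: tau.1, tau.2).
    by rewrite ltnS; apply; apply/mem_flat_map; exists p; split => //; apply: map_f.
rewrite expnS leq_mul2r; apply/orP; right.
rewrite -(size_map fst) -(size_iota 0 k); apply: uniq_leq_size => // x.
have : all (fun x => x < k) (map fst ch).
  by rewrite all_map; apply: sub_all aok => p /andP[].
by move=> /allP al /al; rewrite mem_iota.
Qed.

Lemma subtable_Pi X a d r : r \in rows X -> row_matches X r.1 a ->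
  (subtable X a = Lam \/ in_Pi (subtable X a) d) -> d \in r.2.
Proof.
move=> rin rm; rewrite /subtable.
have rf : r \in [seq r <- rows X | row_matches X r.1 a] by rewrite mem_filter rm.
case: ifP => [/eqP E|NE]; first by rewrite E in rf.
case=> [[] _ E|]; first by rewrite E in rf.
by move/allP/(_ _ rf).
Qed.

Lemma subtable_Pi_intro X a d :
  (forall r, r \in rows X -> row_matches X r.1 a -> d \in r.2) ->
  subtable X a = Lam \/ in_Pi (subtable X a) d.
Proof.
move=> H; rewrite /subtable; case: ifP => _; [by left|right].
by apply/allP => r /=; rewrite mem_filter => /andP[rm rin]; apply: H.
Qed.

Lemma rm_zip T v : uniq (cols T) -> size v = size (cols T) ->
  row_matches T v (zip (cols T) v).
Proof.
move=> u sv; apply/(all_nthP (0,0)) => i; rewrite size_zip sv minnn => ilt.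
by rewrite nth_zip //= index_uniq.
Qed.

Lemma rm_zip_eq T v w : uniq (cols T) -> size v = size (cols T) ->
  size w = size (cols T) -> row_matches T v (zip (cols T) w) -> v = w.
Proof.
move=> u sv sw /(all_nthP (0,0)) H; apply: (@eq_from_nth _ 0); first by rewrite sv sw.
move=> i; rewrite sv => ilt; move: (H i); rewrite size_zip sw minnn nth_zip //=.
by rewrite index_uniq // => /(_ ilt)/eqP.
Qed.

Lemma mem_In (T : eqType) (x : T) s : x \in s -> List.In x s.
Proof. elim: s => //= y s IH; rewrite inE => /orP[/eqP->|/IH h]; [by left|by right]. Qed.

Fixpoint bt (k : nat) (cs : seq nat) (g : seq nat -> nat) : dnode :=
  match cs with
  | [::] => Leaf (g [::])
  | c :: cs' => Node c [seq (d, bt k cs' (fun v => g (d :: v))) | d <- iota 0 k]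
  end.

Lemma map_fst_pair (A B : Type) (F : A -> B) (s : seq A) :
  map fst [seq (x, F x) | x <- s] = s.
Proof. by elim: s => //= x s ->. Qed.

Lemma bt_ok k cs g : 0 < k -> node_ok k (bt k cs g).
Proof.
move=> k0; elim: cs g => //= c cs IH g; rewrite /nilp size_map size_iota -lt0n k0 /=.
by rewrite all_map; apply/allP => d; rewrite mem_iota /= IH andbT.
Qed.

Lemma bt_det k cs g : node_det (bt k cs g).
Proof.
elim: cs g => //= c cs IH g; rewrite map_fst_pair iota_uniq /=.
by rewrite all_map; apply/allP => d _ /=.
Qed.

Lemma bt_attrs k cs g : {subset node_attrs (bt k cs g) <= cs}.
Proof.
elim: cs g => //= c cs IH g x; rewrite inE => /orP[/eqP->|]; first by rewrite mem_head.
move/mem_flat_map => [p [/List.in_map_iff [d [<- _]] /IH xin]]; by rewrite inE xin orbT.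
Qed.

Lemma bt_paths k cs g tau : tau \in node_paths (bt k cs g) ->
  exists w, size w = size cs /\ tau = (zip cs w, g w).
Proof.
elim: cs g tau => [|c cs IH] g tau /=.
  by rewrite inE => /eqP ->; exists [::].
move/mem_flat_map => [p [/List.in_map_iff [d [<- _]] /mapP [q qin ->]]].
have [w [sw Eq]] := IH _ _ qin; exists (d :: w); by rewrite /= sw Eq.
Qed.

Lemma bt_paths2 k cs g w : size w = size cs -> all (fun x => x < k) w ->
  (zip cs w, g w) \in node_paths (bt k cs g).
Proof.
elim: cs g w => [|c cs IH] g [|d w] //=; first by rewrite mem_head.
case=> sw /andP[dk wk]; apply/mem_flat_map.
exists (d, bt k cs (fun v => g (d :: v))); split.
  by apply/List.in_map_iff; exists d; split => //; apply: mem_In; rewrite mem_iota.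
by apply: (map_f (fun q => ((c, d) :: q.1, q.2)) (IH _ _ sw wk)).
Qed.

Lemma expn_pow k c : k ^ c = Nat.pow k c.
Proof. by elim: c => // c IH; rewrite expnS IH. Qed.

Lemma logk_le k l c : 2 <= k -> 0 < l -> l <= k ^ c -> Rle (logk k l) (INR c).
Proof.
move=> /leP k2 /leP l0 /leP lk; rewrite /logk.
have k1 : Rlt 1 (INR k) by apply: lt_1_INR; lia.
have kp : Rlt 0 (INR k) by lra.
have lkp : Rlt 0 (ln (INR k)) by rewrite -ln_1; apply: ln_increasing => //; lra.
apply: (Rmult_le_reg_r (ln (INR k))) => //.
rewrite /Rdiv Rmult_assoc Rinv_l ?Rmult_1_r; last by lra.
rewrite -ln_pow //.
have H : Rle (INR l) (INR k ^ c) by rewrite -pow_INR; apply: le_INR; rewrite -expn_pow.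
have lp : Rlt 0 (INR l) by apply: lt_0_INR.
case: (Rle_lt_or_eq_dec _ _ H) => [h|->]; last by apply: Rle_refl.
by apply: Rlt_le; apply: ln_increasing.
Qed.

Definition nuU (T : table) (U : seq word) (v : seq nat) : seq nat :=
  let s := [seq i <- iota 0 (size U) | row_matches T v (nth [::] U i)] in
  if s == [::] then [:: 0] else s.

Lemma nuU_dset T U v : is_dset (nuU T U v).
Proof.
rewrite /nuU; case: ifP => // /negbT ne; rewrite /is_dset ne /=.
apply: sorted_filter; [exact: ltn_trans | exact: iota_ltn_sorted].
Qed.

Lemma nuU_in T U v a : a \in U -> row_matches T v a -> index a U \in nuU T U v.
Proof.
move=> aU rm.
have h : index a U \in [seq i <- iota 0 (size U) | row_matches T v (nth [::] U i)].
  by rewrite mem_filter nth_index // rm mem_iota /= index_mem.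
by rewrite /nuU; case: ifP => [/eqP E|//]; rewrite E in h.
Qed.

Lemma nuU_spec T U v a d : a \in U -> row_matches T v a ->
  all (fun b => (b == a) || ~~ row_matches T v b) U ->
  d \in nuU T U v -> nth [::] U d = a.
Proof.
move=> aU rm /allP sp.
have h : index a U \in [seq i <- iota 0 (size U) | row_matches T v (nth [::] U i)].
  by rewrite mem_filter nth_index // rm mem_iota /= index_mem.
rewrite /nuU; case: ifP => [/eqP E|_]; first by rewrite E in h.
rewrite mem_filter mem_iota /= => /andP[rmd dlt].
have := sp _ (mem_nth [::] dlt); rewrite rmd orbF => /eqP //.
Qed.

Definition chain (a : word) (d : nat) : dnode :=
  foldr (fun p t => Node p.1 [:: (p.2, t)]) (Leaf d) a.

Lemma chain_paths a d : node_paths (chain a d) = [:: (a, d)].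
Proof. by elim: a => //= p a ->; rewrite cats0; case: p. Qed.

Lemma chain_attrs a d : node_attrs (chain a d) = map fst a.
Proof. by elim: a => //= p a ->; rewrite cats0. Qed.

Lemma chain_ok k a d : all (fun p => p.2 < k) a -> node_ok k (chain a d).
Proof. by elim: a => //= p a IH /andP[-> /IH ->]. Qed.

Lemma chains_paths (s : seq word) (h : word -> nat) :
  tree_paths [seq chain a (h a) | a <- s] = [seq (a, h a) | a <- s].
Proof. by elim: s => //= a s; rewrite /tree_paths /= chain_paths => ->. Qed.

Lemma chains_attrs (s : seq word) (h : word -> nat) :
  tree_attrs [seq chain a (h a) | a <- s] = flatten [seq map fst a | a <- s].
Proof. by elim: s => //= a s; rewrite /tree_attrs /= chain_attrs => ->. Qed.

Theorem lemma4 (k : nat) (A : table -> Prop) (psi : seq nat -> nat)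
    (T : table) (n : nat) :
  2 <= k ->
  closed_class k A ->
  nontrivial A ->
  bounded_measure psi ->
  A T ->
  0 < l_psi k psi T n ->
  exists nu : seq nat -> seq nat,
    valid_nu k (size (cols T)) nu /\
    psi_a k psi (Jop nu T) <= n /\
    Rle (logk k (l_psi k psi T n)) (INR (psi_d k psi (Jop nu T))).
Proof.
move=> k2 [wfA _] _ [_ bnd] AT lpos.
have k0 : 0 < k by apply: leq_trans k2.
have /and4P [ucols rowsok urows _] := wfA T AT.
move: lpos; rewrite /l_psi; case: eqP => // rne lpos.
move: lpos; rewrite /natmax; set Q := (fun m => _ /\ _) => lpos.
have exQ : exists m, Q m.
  by apply: NNPP => nex; move: lpos; rewrite natmin0.
move: (natminP exQ) => [[[U [[[uU Uall Ucov] Umin] sU]] _] _].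
rewrite -sU in lpos *.
set nu := nuU T U.
have UallP : forall a, a \in U -> in_Omega k T a && (psiw psi a <= n) by apply/allP.
have rJne : (rows (Jop nu T) == [::]) = false.
  by rewrite /=; case: (rows T) rne.
have rowsJ : forall r, r \in rows (Jop nu T) -> exists2 r0, r0 \in rows T & r = (r0.1, nu r0.1).
  by move=> r /mapP.
exists nu; split; first by move=> v _ _; apply: nuU_dset.
pose spec a (r : seq nat * seq nat) :=
  row_matches T r.1 a && all (fun b => (b == a) || ~~ row_matches T r.1 b) U.
have Hspec : forall a, a \in U -> has (spec a) (rows T).
  move=> a aU; apply/negPn/negP => nh.
  have sz : size (rem a U) < size U by rewrite size_rem // ltn_predL lpos.
  apply: (Umin _ (rem_uniq a uU) (fun x => @mem_rem _ a U x) sz); split.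
  - exact: rem_uniq.
  - by apply/allP => b /mem_rem /(allP Uall).
  move=> r rin; have /hasP [b bU rb] := Ucov r rin.
  case: (eqVneq b a) => [eba|nba].
    have : ~~ spec a r by apply: contra nh => h; apply/hasP; exists r.
    rewrite /spec -eba rb /= => /allPn [b' b'U].
    rewrite negb_or negbK => /andP [nb' rb'].
    by apply/hasP; exists b' => //; rewrite (mem_rem_uniq _ uU) inE nb' b'U.
  by apply/hasP; exists b => //; rewrite (mem_rem_uniq _ uU) inE nba bU.
pose G1 := [seq chain a (index a U) | a <- U].
have ndG1 : nondet_tree k (Jop nu T) G1.
  split.
  - rewrite /k_tree /G1 /nilp size_map -lt0n lpos /= all_map.
    apply/allP => a /(allP Uall) /andP [om _]; apply: chain_ok.
    by apply: sub_all om => p /andP[].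
  - rewrite /G1 chains_attrs => x /flattenP [s /mapP [a aU ->] /mapP [p pa ->]].
    by have := UallP a aU; rewrite /in_Omega => /andP [/allP om _]; case/andP: (om p pa).
  - move=> r /rowsJ [r0 r0in ->]; have /hasP [b bU rb] := Ucov r0 r0in.
    by exists (b, index b U) => //; rewrite /G1 chains_paths; apply: map_f.
  - move=> tau; rewrite /G1 chains_paths => /mapP [a aU ->] /=.
    apply: subtable_Pi_intro => r /rowsJ [r0 r0in ->] /= rm.
    exact: nuU_in.
have cG1 : tree_cost psi G1 <= n.
  rewrite /tree_cost /G1 chains_paths; apply/bigmax_leqP_seq => tau /mapP [a aU ->] _ /=.
  by case/andP: (UallP a aU).
split.
  rewrite /psi_a rJne; apply: leq_trans cG1.
  by apply: (natminP (ex_intro _ _ (ex_intro _ G1 (conj ndG1 erefl)))).2; exists G1.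
pose g := fun v => head 0 (nu v).
pose G2 := [:: bt k (cols T) g].
have dG2 : det_tree k (Jop nu T) G2.
  split => //=; last by rewrite bt_det.
  split.
  - by rewrite /k_tree /= bt_ok.
  - by move=> x; rewrite /tree_attrs /= cats0 => /bt_attrs.
  - move=> r /rowsJ [r0 r0in ->].
    have /and3P [/eqP sr0 ar0 _] := allP rowsok r0 r0in.
    exists (zip (cols T) r0.1, g r0.1); first by rewrite /tree_paths /= cats0 bt_paths2.
    exact: rm_zip.
  - move=> tau; rewrite /tree_paths /= cats0 => /bt_paths [w [sw ->]] /=.
    apply: subtable_Pi_intro => r /rowsJ [r0 r0in ->] /= rm.
    have /and3P [/eqP sr0 _ _] := allP rowsok r0 r0in.
    rewrite (rm_zip_eq ucols sr0 sw rm) /g.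
    rewrite /nu; have := nuU_dset T U w; rewrite /is_dset.
    by case: (nuU T U w) => //= x s _; rewrite mem_head.
have exD : exists m, exists G, det_tree k (Jop nu T) G /\ tree_cost psi G = m.
  by exists (tree_cost psi G2), G2.
have [[G [dG cG]] _] := natminP exD.
rewrite /psi_d rJne -cG.
apply: logk_le => //.
case: dG => [[kt _ cov pi] sz1 adet].
have [t Gt] : exists t, G = [:: t] by case: G sz1 {cG kt cov pi adet} => [|t [|]] //; exists t.
set P := tree_paths G.
have PP : size P <= k ^ tree_cost psi G.
  move: adet kt; rewrite /P Gt /= => /andP [dt _].
  rewrite /tree_paths /= cats0 => kt; apply: paths_count => //.
    by move: kt; rewrite /k_tree /= andbT.
  move=> tau taut; rewrite -(size_map fst); apply: leq_trans (bnd _) _.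
  by apply: (leq_bigmax_seq tau) => //; rewrite /tree_paths /= cats0.
pose sp a := nth ([::], [::]) (rows T) (find (spec a) (rows T)).
pose f a := find (fun tau => row_matches T (sp a).1 tau.1) P.
have spP : forall a, a \in U -> sp a \in rows T /\ spec a (sp a).
  by move=> a aU; split; [rewrite mem_nth // -has_find | apply: nth_find]; apply: Hspec.
have fP : forall a, a \in U -> f a < size P /\
    row_matches T (sp a).1 (nth ([::], 0) P (f a)).1.
  move=> a aU; have [spin _] := spP a aU.
  have hs : has (fun tau => row_matches T (sp a).1 tau.1) P.
    have [tau tauP rm] := cov ((sp a).1, nu (sp a).1) (map_f _ spin).
    by apply/hasP; exists tau.
  by split; [rewrite /f -has_find | exact: (nth_find ([::], 0) hs)].
have fdec : forall a, a \in U -> nth [::] U (nth ([::], 0) P (f a)).2 = a.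
  move=> a aU; have [spin /andP [rma spa]] := spP a aU; have [flt rmf] := fP a aU.
  apply: (nuU_spec aU rma spa).
  have := pi _ (mem_nth ([::], 0) flt).
  by apply: (subtable_Pi (r := ((sp a).1, nu (sp a).1))) => //; apply: map_f.
apply: leq_trans PP.
rewrite -(size_map f) -(size_iota 0 (size P)); apply: uniq_leq_size.
  rewrite map_inj_in_uniq // => a b aU bU eqf.
  by rewrite -(fdec a aU) -(fdec b bU) eqf.
by move=> x /mapP [a aU ->]; rewrite mem_iota /=; case: (fP a aU).
Qed.
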